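(* Consider the multicast coalitional game with player set $\mathcal{N}=\{1,\ldots,N\}$, $N\ge 2$, and value function $$v(S)=\sum_{i\in S}U_i-\sum_{i\in S}\frac{\alpha_i}{R_S}-\frac{\beta+\gamma}{R_S},\qquad R_S=\min_{i\in S}R_i,$$ for nonempty $S\subseteq\mathcal{N}$. Let $R_{min}=\min_iR_i$, $R_{max}=\max_iR_i$, $\alpha_{min}=\min_i\alpha_i$, $\alpha_{max}=\max_i\alpha_i$. If $$\frac{R_{max}}{R_{min}}\le\left(\frac{N}{N-1}\right)\left(\frac{\alpha_{min}(N-1)+\beta+\gamma}{\alpha_{max}N+\beta+\gamma}\right),$$ then the core is non-empty.
   Context: A transmitter multicasts a file of size $X>0$ bits to users $\mathcal{N}=\{1,\dots,N\}$. User $i$ has valuation $U_i\in\mathbb{R}$, downloads at rate $R_i>0$, and consumes receive power $P_{Rx,i}>0$; the transmitter transmits at power $P_{Tx}>0$. Costs per unit energy are $a>0$ at users and $b>0$ at the transmitter; bandwidth cost per second is $w>0$. Set $\alpha_i=aP_{Rx,i}X$, $\beta=bP_{Tx}X$, $\gamma=wX$. The core is the set of payoff vectors $(x_1,\dots,x_N)\in\mathbb{R}^N$ with $\sum_{i\in\mathcal{N}}x_i=v(\mathcal{N})$ and $\sum_{i\in S}x_i\ge v(S)$ for every nonempty $S\subseteq\mathcal{N}$. *)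

(* Defs.v *)
From HB Require Import structures.
From mathcomp Require Import all_boot all_order all_algebra.
Set Implicit Arguments. Unset Strict Implicit. Unset Printing Implicit Defensive.
Import Order.TTheory GRing.Theory Num.Theory.
Local Open Scope ring_scope.

Section Defs.
Variables (F : realFieldType) (N : nat).

(* minimum / maximum of f over a nonempty set S (0 if S is empty; never used then) *)
Definition setmin (S : {set 'I_N}) (f : 'I_N -> F) : F :=
  match [pick i in S] with
  | Some i0 => \big[Num.min/f i0]_(i in S) f i
  | None => 0
  end.

Definition setmax (S : {set 'I_N}) (f : 'I_N -> F) : F :=
  match [pick i in S] with
  | Some i0 => \big[Num.max/f i0]_(i in S) f i
  | None => 0
  end.

Definition multicast_value (U Rr alpha : 'I_N -> F) (beta gamma : F)
  (S : {set 'I_N}) : F :=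
  \sum_(i in S) U i - \sum_(i in S) alpha i / setmin S Rr
  - (beta + gamma) / setmin S Rr.

Definition in_core (v : {set 'I_N} -> F) (x : 'I_N -> F) : Prop :=
  \sum_(i in [set: 'I_N]) x i = v [set: 'I_N] /\
  forall S : {set 'I_N}, S != set0 -> v S <= \sum_(i in S) x i.

End Defs.

(* Main.v *)
Require Import Defs.

From HB Require Import structures.
From mathcomp Require Import all_boot all_order all_algebra.
From mathcomp Require Import ring lra.
Import Order.TTheory GRing.Theory Num.Theory.
Local Open Scope ring_scope.

Section L.
Variables (F : realFieldType) (N : nat).
Implicit Types (S : {set 'I_N}) (f : 'I_N -> F).

Lemma setmin_lb S f c : S != set0 -> (forall i, i \in S -> c <= f i) -> c <= setmin S f.
Proof.
move=> hS hc; rewrite /setmin; case: pickP => [i0 Hi0|H].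
  apply: (big_ind (fun y => c <= y)); [exact: hc| |exact: hc].
  by move=> x y hx hy; rewrite le_min hx hy.
by case/set0Pn: hS => i; rewrite H.
Qed.

Lemma setmin_ub S f c : S != set0 -> (forall i, i \in S -> f i <= c) -> setmin S f <= c.
Proof.
move=> hS hc; rewrite /setmin; case: pickP => [i0 Hi0|H].
  apply: (big_ind (fun y => y <= c)); [exact: hc| |exact: hc].
  by move=> x y hx hy; rewrite ge_min hx.
by case/set0Pn: hS => i; rewrite H.
Qed.

Lemma setmin_le S f i : i \in S -> setmin S f <= f i.
Proof.
move=> hi; rewrite /setmin; case: pickP => [i0 Hi0|H]; last by rewrite H in hi.
by rewrite (bigD1 i) //= ge_min lexx.
Qed.

Lemma setmax_ge S f i : i \in S -> f i <= setmax S f.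
Proof.
move=> hi; rewrite /setmax; case: pickP => [i0 Hi0|H]; last by rewrite H in hi.
by rewrite (bigD1 i) //= le_max lexx.
Qed.
End L.
Lemma poly_ineq (F : realFieldType) (amax c A D n s : F) :
  0 < c -> 0 <= amax -> 1 <= D -> n = D + 1 -> 0 <= s -> s <= D -> 0 <= A -> A <= s * amax ->
  (amax * D + c) * (n * A + s * c) <= D * (amax * n + c) * (A + c).
Proof.
move=> hc ha hD -> hs hsD hA hAs.
have : 0 <= c * (D * amax * (D + 1 - s) - A + (D - s) * c).
  apply: mulr_ge0; first lra.
  have h1 : 0 <= (D - s) * c by apply: mulr_ge0; lra.
  have h2 : s * amax <= D * amax * (D + 1 - s).
    have -> : D * amax * (D + 1 - s) = s * amax + (D+1) * ((D - s) * amax) by ring.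
    have : 0 <= (D+1) * ((D - s) * amax) by apply: mulr_ge0; [lra| apply: mulr_ge0; lra].
    lra.
  lra.
move=> h.
have -> : D * (amax * (D + 1) + c) * (A + c) = (amax * D + c) * ((D + 1) * A + s * c) + c * (D * amax * (D + 1 - s) - A + (D - s) * c) by ring.
lra.
Qed.

Lemma final_ineq (F : realFieldType) (Rmin m Rmax A c amin amax D n s : F) :
  0 < Rmin -> Rmin <= m -> m <= Rmax ->
  0 < c -> 0 < amin -> amin <= amax -> 1 <= D -> n = D + 1 -> 0 <= s -> s <= D ->
  0 <= A -> A <= s * amax ->
  Rmax / Rmin <= n / D * ((amin * D + c) / (amax * n + c)) ->
  A / Rmin + s * c / (n * Rmin) <= A / m + c / m.
Proof.
move=> hR hm hM hc ha hamm hD hn hs hsD hA hAs hyp.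
have hm0 : 0 < m by lra.
have hn0 : 0 < n by lra.
have hD0 : 0 < D by lra.
have hMp : 0 < amax * n + c by have := mulr_gt0 (lt_le_trans ha hamm) hn0; lra.
set K := n / D * ((amin * D + c) / (amax * n + c)) in hyp.
have h1 : Rmax <= K * Rmin by rewrite -ler_pdivrMr.
have hK : K * (D * (amax * n + c)) <= n * (amax * D + c).
  rewrite /K.
  have -> : n / D * ((amin * D + c) / (amax * n + c)) * (D * (amax * n + c)) = n * (amin * D + c).
    by field; apply/andP; split; rewrite gt_eqF.
  apply: ler_wpM2l; first lra.
  have : amin * D <= amax * D by apply: ler_wpM2r; lra.
  lra.
have hP := @poly_ineq _ _ _ _ _ _ _ hc (ltW (lt_le_trans ha hamm)) hD hn hs hsD hA hAs.
have hK0 : 0 <= K.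
  have : 0 < K * Rmin by lra.
  by rewrite pmulr_lgt0 // => /ltW.
have hm2 : m <= K * Rmin by lra.
have hX : 0 <= n * A + s * c by have := mulr_ge0 hs (ltW hc); have := mulr_ge0 (ltW hn0) hA; lra.
have -> : A / Rmin + s * c / (n * Rmin) = (n * A + s * c) / (n * Rmin)
  by field; apply/andP; split; rewrite gt_eqF.
have -> : A / m + c / m = (A + c) / m by rewrite mulrDl.
rewrite ler_pdivrMr; last exact: mulr_gt0.
rewrite mulrAC ler_pdivlMr //.
have e1 : (n * A + s * c) * m <= (n * A + s * c) * (K * Rmin) by apply: ler_wpM2l.
apply: (le_trans e1).
have hDM : 0 < D * (amax * n + c) by apply: mulr_gt0.
rewrite -(ler_pM2r hDM).
have e2 : (n * A + s * c) * (K * Rmin) * (D * (amax * n + c)) = Rmin * (n * A + s * c) * (K * (D * (amax * n + c))) by ring.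
rewrite e2.
have e3 : Rmin * (n * A + s * c) * (K * (D * (amax * n + c))) <= Rmin * (n * A + s * c) * (n * (amax * D + c)).
  apply: ler_wpM2l => //; apply: mulr_ge0; lra.
apply: (le_trans e3).
have -> : Rmin * (n * A + s * c) * (n * (amax * D + c)) = (Rmin * n) * ((amax * D + c) * (n * A + s * c)) by ring.
have -> : (A + c) * (n * Rmin) * (D * (amax * n + c)) = (Rmin * n) * (D * (amax * n + c) * (A + c)) by ring.
apply: ler_wpM2l => //; apply: mulr_ge0; lra.
Qed.

Theorem theorem4 (F : realFieldType) (N : nat) (hN : (2 <= N)%N)
  (X a b w PTx : F) (U Rr PRx : 'I_N -> F)
  (hX : 0 < X) (ha : 0 < a) (hb : 0 < b) (hw : 0 < w) (hPTx : 0 < PTx)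
  (hR : forall i, 0 < Rr i) (hPRx : forall i, 0 < PRx i) :
  let alpha := fun i => a * PRx i * X in
  let beta := b * PTx * X in
  let gamma := w * X in
  let Rmin := setmin [set: 'I_N] Rr in
  let Rmax := setmax [set: 'I_N] Rr in
  let amin := setmin [set: 'I_N] alpha in
  let amax := setmax [set: 'I_N] alpha in
  Rmax / Rmin <= (N%:R / (N - 1)%:R) *
                 ((amin * (N - 1)%:R + beta + gamma) / (amax * N%:R + beta + gamma)) ->
  exists x : 'I_N -> F, in_core (multicast_value U Rr alpha beta gamma) x.
Proof.
move=> alpha beta gamma Rmin Rmax amin amax hyp.
rewrite -!addrA in hyp.
set c := beta + gamma in hyp *.
have hc : 0 < c by rewrite /c /beta /gamma; apply: addr_gt0; apply: mulr_gt0 => //; apply: mulr_gt0.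
have hal : forall i, 0 < alpha i by move=> i; rewrite /alpha; apply: mulr_gt0 => //; apply: mulr_gt0.
have hN0 : (0 < N)%N by apply: leq_trans hN.
pose i0 : 'I_N := Ordinal hN0.
have hT : [set: 'I_N] != set0 by apply/set0Pn; exists i0; rewrite in_setT.
have hRmin : 0 < Rmin.
  rewrite /Rmin /setmin; case: pickP => [j0 _|H]; last by have := H i0; rewrite in_setT.
  by apply: (big_ind (fun y => 0 < y)) => // x y hx hy; rewrite lt_min hx hy.
have hamin : 0 < amin.
  rewrite /amin /setmin; case: pickP => [j0 _|H]; last by have := H i0; rewrite in_setT.
  by apply: (big_ind (fun y => 0 < y)) => // x y hx hy; rewrite lt_min hx hy.
have hamm : amin <= amax.
  apply: (@le_trans _ _ (alpha i0)); first by apply: setmin_le; rewrite in_setT.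
  by apply: setmax_ge; rewrite in_setT.
have hNr : (N%:R : F) != 0 by rewrite pnatr_eq0 -lt0n.
pose x := fun i => U i - alpha i / Rmin - c / (N%:R * Rmin).
have hsumS : forall S : {set 'I_N}, \sum_(i in S) x i =
    \sum_(i in S) U i - \sum_(i in S) alpha i / Rmin - #|S|%:R * c / (N%:R * Rmin).
  move=> S; rewrite /x !sumrB sumr_const -mulr_suml; congr (_ - _).
  by rewrite -mulr_natl; ring.
have part1 : \sum_(i in [set: 'I_N]) x i = multicast_value U Rr alpha beta gamma [set: 'I_N].
  rewrite hsumS /multicast_value -/Rmin -/c cardsT card_ord; congr (_ - _).
  by field; apply/andP; split => //; rewrite gt_eqF.
exists x; split => // S hS.
have [->|hST] := eqVneq S [set: 'I_N]; first by rewrite part1.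
have hs : (#|S| <= N - 1)%N.
  have : (#|S| < #|[set: 'I_N]|)%N by apply: proper_card; rewrite properT.
  by rewrite cardsT card_ord => h; rewrite -ltnS subn1 prednK.
rewrite hsumS /multicast_value.
set m := setmin S Rr.
set A := \sum_(i in S) alpha i.
have -> : \sum_(i in S) alpha i / m = A / m by rewrite mulr_suml.
have -> : \sum_(i in S) alpha i / Rmin = A / Rmin by rewrite mulr_suml.
rewrite -/c.
suff H : A / Rmin + #|S|%:R * c / (N%:R * Rmin) <= A / m + c / m by lra.
have hm1 : Rmin <= m.
  by apply: setmin_lb => // i _; apply: setmin_le; rewrite in_setT.
have hm2 : m <= Rmax.
  case/set0Pn: hS => i hi; apply: (@le_trans _ _ (Rr i)); first exact: setmin_le.
  by apply: setmax_ge; rewrite in_setT.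
have hA0 : 0 <= A by apply: sumr_ge0 => i _; apply: ltW.
have hAs : A <= #|S|%:R * amax.
  rewrite /A mulr_natl -sumr_const; apply: ler_sum => i _.
  by apply: setmax_ge; rewrite in_setT.
have hD : (1 : F) <= (N - 1)%:R by rewrite ler1n subn_gt0.
have hn : (N%:R : F) = (N - 1)%:R + 1 by rewrite natr1 subn1 prednK.
have hs0 : (0:F) <= #|S|%:R by [].
have hsD : (#|S|%:R : F) <= (N-1)%:R by rewrite ler_nat.
have := @final_ineq _ _ _ _ _ _ _ _ _ _ _ hRmin hm1 hm2 hc hamin hamm hD hn hs0 hsD hA0 hAs.
move=> HH; apply: HH. exact: hyp.

Qed.
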